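(* Let $\lambda_1,\lambda_2\ge0$ and $\mathbf m\in\mathcal B(\lambda+\rho)_{res}$, and let $i\in\{1,2\}$. If $e_i(A(\mathbf m))\ne0$, then $e_i(\mathbf m)\in\mathcal B(\lambda+\rho)_{res}$ and $A(e_i(\mathbf m))=e_i(A(\mathbf m))$; likewise, if $f_i(A(\mathbf m))\ne0$, then $f_i(\mathbf m)\in\mathcal B(\lambda+\rho)_{res}$ and $A(f_i(\mathbf m))=f_i(A(\mathbf m))$. In particular the image $\mathrm{Arr}(\lambda)=A(\mathcal B(\lambda+\rho)_{res})$ is closed under the operators $e_1,e_2,f_1,f_2$ (wherever they are nonzero).
   Context: For $\mathbf m\in\mathbb Z_{\ge0}^6$ and integers $\lambda_1,\lambda_2\ge0$: $s_1=\lambda_2+m_5+m_6-m_1-m_2-m_3$, $s_2=\lambda_2+m_5+m_6-m_2-2m_3$, $s_3=\lambda_2+m_6-m_3-m_4$, $s_4=\lambda_2+m_6-m_4-m_5$, $s_5=\lambda_2-m_5$, $s_6=\lambda_1-m_6$. $\mathcal B(\lambda+\rho)_{res}$ is the set of $\mathbf m$ with $m_3=m_5$, $s_j\ge-1$ for $j\in\{1,2,5,6\}$, $s_3=s_4\le0$ even; decoration $d(\mathbf m)=-s_3/2$. An array is $\left[\begin{smallmatrix}a&b&c&b&d\\&x&y&z&\\&&k&&\end{smallmatrix}\right]$ with all entries in $\mathbb Z_{\ge0}$ (second entry equal to fourth in the top row); $k$ is its decoration and $a+6b+2c+d$ its weight. Raising operators: $e_1$ sends it to $\left[\begin{smallmatrix}a-1&b&c+1&b&d-1\\&x&y+1&z&\\&&k+1&&\end{smallmatrix}\right]$,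 or to $0$ if $\min\{a,d\}=0$; $e_2$ sends it to $\left[\begin{smallmatrix}a&b-1&c+3&b-1&d\\&x+1&y&z+1&\\&&k+1&&\end{smallmatrix}\right]$, or to $0$ if $b=0$. Lowering operators: $f_1$ sends it to $\left[\begin{smallmatrix}a+1&b&c-1&b&d+1\\&x&y-1&z&\\&&k-1&&\end{smallmatrix}\right]$, or $0$ if $\min\{c,y,k\}=0$; $f_2$ sends it to $\left[\begin{smallmatrix}a&b+1&c-3&b+1&d\\&x-1&y&z-1&\\&&k-1&&\end{smallmatrix}\right]$, or $0$ if $\min\{x,z,k\}=0$ or $c<3$. For $\mathbf m\in\mathcal B(\lambda+\rho)_{res}$, $A(\mathbf m)=\left[\begin{smallmatrix}m_2&m_5&m_4&m_5&m_6\\&s_2+1&s_6+1&s_5+1&\\&&d(\mathbf m)&&\end{smallmatrix}\right]$. On Lusztig data define $e_1(\mathbf m)=(m_1,m_2-1,m_3,m_4+1,m_5,m_6-1)$, $e_2(\mathbf m)=(m_1,m_2,m_3-1,m_4+3,m_5-1,m_6)$, $f_1(\mathbf m)=(m_1,m_2+1,m_3,m_4-1,m_5,m_6+1)$, $f_2(\mathbf m)=(m_1,m_2,m_3+1,m_4-3,m_5+1,m_6)$. *)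

(* Defs.v *)
From Stdlib Require Import ZArith Lia.
Open Scope Z_scope.

(* Lusztig datum m = (m1,...,m6) in Z^6 (nonnegativity imposed in B_res). *)
Record LD := mkLD { m1 : Z; m2 : Z; m3 : Z; m4 : Z; m5 : Z; m6 : Z }.

Definition s1 (l1 l2 : Z) (m : LD) := l2 + m5 m + m6 m - m1 m - m2 m - m3 m.
Definition s2 (l1 l2 : Z) (m : LD) := l2 + m5 m + m6 m - m2 m - 2 * m3 m.
Definition s3 (l1 l2 : Z) (m : LD) := l2 + m6 m - m3 m - m4 m.
Definition s4 (l1 l2 : Z) (m : LD) := l2 + m6 m - m4 m - m5 m.
Definition s5 (l1 l2 : Z) (m : LD) := l2 - m5 m.
Definition s6 (l1 l2 : Z) (m : LD) := l1 - m6 m.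

Definition Bres (l1 l2 : Z) (m : LD) : Prop :=
  0 <= m1 m /\ 0 <= m2 m /\ 0 <= m3 m /\ 0 <= m4 m /\ 0 <= m5 m /\ 0 <= m6 m /\
  m3 m = m5 m /\
  -1 <= s1 l1 l2 m /\ -1 <= s2 l1 l2 m /\ -1 <= s5 l1 l2 m /\ -1 <= s6 l1 l2 m /\
  s3 l1 l2 m = s4 l1 l2 m /\ s3 l1 l2 m <= 0 /\ Z.Even (s3 l1 l2 m).

(* decoration d(m) = -s3/2 (exact since s3 is even on Bres) *)
Definition deco (l1 l2 : Z) (m : LD) : Z := - (s3 l1 l2 m) / 2.

(* Array [a b c b d ; x y z ; k]; the repeated top entry b is stored once. *)
Record Arr := mkArr { aa : Z; ab : Z; ac : Z; ad : Z;
                      ax : Z; ay : Z; az : Z; ak : Z }.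

Definition isArray (T : Arr) : Prop :=
  0 <= aa T /\ 0 <= ab T /\ 0 <= ac T /\ 0 <= ad T /\
  0 <= ax T /\ 0 <= ay T /\ 0 <= az T /\ 0 <= ak T.

Inductive Idx := i1 | i2.

(* Operators on arrays; None stands for 0. *)
Definition eArr (i : Idx) (T : Arr) : option Arr :=
  match i with
  | i1 => if Z.eqb (Z.min (aa T) (ad T)) 0 then None else
          Some (mkArr (aa T - 1) (ab T) (ac T + 1) (ad T - 1)
                      (ax T) (ay T + 1) (az T) (ak T + 1))
  | i2 => if Z.eqb (ab T) 0 then None else
          Some (mkArr (aa T) (ab T - 1) (ac T + 3) (ad T)
                      (ax T + 1) (ay T) (az T + 1) (ak T + 1))
  end.

Definition fArr (i : Idx) (T : Arr) : option Arr :=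
  match i with
  | i1 => if Z.eqb (Z.min (Z.min (ac T) (ay T)) (ak T)) 0 then None else
          Some (mkArr (aa T + 1) (ab T) (ac T - 1) (ad T + 1)
                      (ax T) (ay T - 1) (az T) (ak T - 1))
  | i2 => if orb (Z.eqb (Z.min (Z.min (ax T) (az T)) (ak T)) 0) (Z.ltb (ac T) 3)
          then None else
          Some (mkArr (aa T) (ab T + 1) (ac T - 3) (ad T)
                      (ax T - 1) (ay T) (az T - 1) (ak T - 1))
  end.

Definition Amap (l1 l2 : Z) (m : LD) : Arr :=
  mkArr (m2 m) (m5 m) (m4 m) (m6 m)
        (s2 l1 l2 m + 1) (s6 l1 l2 m + 1) (s5 l1 l2 m + 1) (deco l1 l2 m).

Definition eLD (i : Idx) (m : LD) : LD :=
  match i with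
  | i1 => mkLD (m1 m) (m2 m - 1) (m3 m) (m4 m + 1) (m5 m) (m6 m - 1)
  | i2 => mkLD (m1 m) (m2 m) (m3 m - 1) (m4 m + 3) (m5 m - 1) (m6 m)
  end.

Definition fLD (i : Idx) (m : LD) : LD :=
  match i with
  | i1 => mkLD (m1 m) (m2 m + 1) (m3 m) (m4 m - 1) (m5 m) (m6 m + 1)
  | i2 => mkLD (m1 m) (m2 m) (m3 m + 1) (m4 m - 3) (m5 m + 1) (m6 m)
  end.

Definition inArrLam (l1 l2 : Z) (T : Arr) : Prop :=
  exists m, Bres l1 l2 m /\ Amap l1 l2 m = T.

(* Main.v *)
Require Import Defs.
From Stdlib Require Import ZArith Lia.
Open Scope Z_scope.

Lemma Hd : forall x j, x = 2*j -> -x/2 = -j.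
Proof. intros x j ->. replace (-(2*j)) with ((-j)*2) by ring. apply Z.div_mul; lia. Qed.

Ltac mins := repeat match goal with
  | H : context [Z.min ?a ?b] |- _ =>
      let h1 := fresh in let h2 := fresh in
      destruct (Z.min_spec a b) as [[h1 h2]|[h1 h2]]; rewrite h2 in H; clear h2
  end.

Lemma part1 (l1 l2 : Z) (m : LD) (i : Idx) : Bres l1 l2 m ->
     (eArr i (Amap l1 l2 m) <> None ->
        Bres l1 l2 (eLD i m) /\ Some (Amap l1 l2 (eLD i m)) = eArr i (Amap l1 l2 m)) /\
     (fArr i (Amap l1 l2 m) <> None ->
        Bres l1 l2 (fLD i m) /\ Some (Amap l1 l2 (fLD i m)) = fArr i (Amap l1 l2 m)).
Proof.
  destruct m as [a1 a2 a3 a4 a5 a6].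
  unfold Bres, s1, s2, s3, s4, s5, s6; cbn [m1 m2 m3 m4 m5 m6].
  intros (H1&H2&H3&H4&H5&H6&H7&H8&H9&H10&H11&H12&H13&[k Hk]).
  assert (Hdk : deco l1 l2 (mkLD a1 a2 a3 a4 a5 a6) = -k).
  { unfold deco, s3; cbn [m3 m4 m6]. apply Hd; lia. }
  unfold eArr, fArr, Amap, eLD, fLD.
  rewrite Hdk; unfold s2, s5, s6.
  destruct i; cbn [aa ab ac ad ax ay az ak m1 m2 m3 m4 m5 m6]; split; intro H.
  - destruct (Z.eqb _ 0) eqn:E; [congruence|]. apply Z.eqb_neq in E. mins;
    (split; [unfold Bres, s1, s2, s3, s4, s5, s6; cbn [m1 m2 m3 m4 m5 m6];
      repeat split; try lia; exists (k-1); lia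
    | f_equal; unfold deco, s2, s3, s5, s6; cbn [m1 m2 m3 m4 m5 m6]; f_equal; try lia;
      rewrite (Hd _ (k-1)) by lia; lia]).
  - destruct (Z.eqb _ 0) eqn:E; [congruence|]. apply Z.eqb_neq in E. mins;
    (split; [unfold Bres, s1, s2, s3, s4, s5, s6; cbn [m1 m2 m3 m4 m5 m6];
      repeat split; try lia; exists (k+1); lia
    | f_equal; unfold deco, s2, s3, s5, s6; cbn [m1 m2 m3 m4 m5 m6]; f_equal; try lia;
      rewrite (Hd _ (k+1)) by lia; lia]).
  - destruct (Z.eqb _ 0) eqn:E; [congruence|]. apply Z.eqb_neq in E. mins;
    (split; [unfold Bres, s1, s2, s3, s4, s5, s6; cbn [m1 m2 m3 m4 m5 m6];
      repeat split; try lia; exists (k-1); lia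
    | f_equal; unfold deco, s2, s3, s5, s6; cbn [m1 m2 m3 m4 m5 m6]; f_equal; try lia;
      rewrite (Hd _ (k-1)) by lia; lia]).
  - destruct (orb _ _) eqn:E; [congruence|]. apply Bool.orb_false_iff in E. destruct E as [E E']. apply Z.eqb_neq in E. apply Z.ltb_ge in E'. mins;
    (split; [unfold Bres, s1, s2, s3, s4, s5, s6; cbn [m1 m2 m3 m4 m5 m6];
      repeat split; try lia; exists (k+1); lia
    | f_equal; unfold deco, s2, s3, s5, s6; cbn [m1 m2 m3 m4 m5 m6]; f_equal; try lia;
      rewrite (Hd _ (k+1)) by lia; lia]).
Qed.

Theorem mainTheorem7 (l1 l2 : Z) (hl1 : 0 <= l1) (hl2 : 0 <= l2) :
  (forall (m : LD) (i : Idx), Bres l1 l2 m ->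
     (eArr i (Amap l1 l2 m) <> None ->
        Bres l1 l2 (eLD i m) /\ Some (Amap l1 l2 (eLD i m)) = eArr i (Amap l1 l2 m)) /\
     (fArr i (Amap l1 l2 m) <> None ->
        Bres l1 l2 (fLD i m) /\ Some (Amap l1 l2 (fLD i m)) = fArr i (Amap l1 l2 m))) /\
  (forall (T T' : Arr) (i : Idx), inArrLam l1 l2 T ->
     (eArr i T = Some T' -> inArrLam l1 l2 T') /\
     (fArr i T = Some T' -> inArrLam l1 l2 T')).
Proof.
  split; [intros; apply part1; auto|].
  intros T T' i [m [HB HA]]; subst T.
  destruct (part1 l1 l2 m i HB) as [Pe Pf].
  split; intro H.
  - destruct Pe as [B E]; [congruence|]. exists (eLD i m); split; [auto|congruence].
  - destruct Pf as [B E]; [congruence|]. exists (fLD i m); split; [auto|congruence].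
Qed.
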